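(* Let $\Theta$ be a space of input histories satisfying the free-choice condition and let $\hat\Theta\in\mathrm{CC}(\Theta)$ be a causal completion of $\Theta$. Then $E^{\hat\Theta}=E^\Theta$ and $I^{\hat\Theta}_\omega=I^\Theta_\omega$ for all $\omega\in E^\Theta$.
   Context: A partial function is a function $f$ with domain $\mathrm{dom}(f)$ a subset of an index set, values in given sets; ordered by restriction. Compatible = agreeing on common domain; a compatible set $\mathcal F$ has join $\bigvee\mathcal F$ (union). $\Theta$ is $\vee$-prime if for compatible $\mathcal F\subseteq\Theta$ with $\bigvee\mathcal F\in\Theta$ we have $\bigvee\mathcal F\in\mathcal F$. A space of input histories is a finite $\vee$-prime set of partial functions; $E^\Theta=\bigcup_{h\in\Theta}\mathrm{dom}(h)$, $I^\Theta_\omega=\{h(\omega):h\in\Theta,\omega\in\mathrm{dom}(h)\}$, $\mathrm{Ext}(\Theta)=\{\bigvee\mathcal F:\emptyset\ne\mathcal F\subseteq\Theta\text{ compatible}\}$. Free-choice: maximal elements of $\mathrm{Ext}(\Theta)$ are exactly the total functions in $\prod_{\omega\in E^\Theta}I^\Theta_\omega$. $\mathrm{tips}_\Theta(h)=\mathrm{dom}(h)\setminus\bigcup\{\mathrm{dom}(k):k\in\mathrm{Ext}(\Theta),k<h\}$. Causally complete: free-choice and $|\mathrm{tips}_\Theta(h)|=1$ for all $h\in\Theta$. Spaces are ordered by $\Theta_1\le\Theta_2$ iff $\mathrm{Ext}(\Theta_1)\supseteq\mathrm{Ext}(\Theta_2)$. The causal completions $\mathrm{CC}(\Theta)$ are the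 maximal elements of $\{\Theta_1\le\Theta:\Theta_1\text{ causally complete}\}$. *)

(* Defs.v *)
From Stdlib Require Import List.
Set Implicit Arguments.

Section PartialFunctions.
Variables (I V : Type).

Definition pfun := I -> option V.

Definition pset := pfun -> Prop.

Definition in_dom (h : pfun) (i : I) : Prop := h i <> None.

Definition pf_le (h k : pfun) : Prop := forall i v, h i = Some v -> k i = Some v.
Definition pf_lt (h k : pfun) : Prop := pf_le h k /\ h <> k.

Definition compatible (F : pset) : Prop :=
  forall f g, F f -> F g -> forall i v w, f i = Some v -> g i = Some w -> v = w.

Definition is_join (F : pset) (h : pfun) : Prop :=
  forall i v, h i = Some v <-> exists f, F f /\ f i = Some v.

Definition subset (F G : pset) : Prop := forall f, F f -> G f.

Definition finite_set (T : pset) : Prop :=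
  exists l : list pfun, forall h, T h <-> In h l.

Definition vee_prime (T : pset) : Prop :=
  forall F h, subset F T -> compatible F -> is_join F h -> T h -> F h.

(* A space of input histories: a finite vee-prime set of partial functions. *)
Definition space (T : pset) : Prop := finite_set T /\ vee_prime T.

Definition Ev (T : pset) (i : I) : Prop := exists h, T h /\ in_dom h i.

Definition Iv (T : pset) (i : I) (v : V) : Prop := exists h, T h /\ h i = Some v.

Definition Ext (T : pset) (k : pfun) : Prop :=
  exists F, (exists f, F f) /\ subset F T /\ compatible F /\ is_join F k.

Definition maximal_in (S : pset) (k : pfun) : Prop :=
  S k /\ forall k', S k' -> pf_le k k' -> k' = k.

Definition total_in (T : pset) (k : pfun) : Prop :=
  (forall i, in_dom k i <-> Ev T i) /\ (forall i v, k i = Some v -> Iv T i v).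

Definition free_choice (T : pset) : Prop :=
  forall k, maximal_in (Ext T) k <-> total_in T k.

Definition tips (T : pset) (h : pfun) (i : I) : Prop :=
  in_dom h i /\ ~ (exists k, Ext T k /\ pf_lt k h /\ in_dom k i).

Definition causally_complete (T : pset) : Prop :=
  free_choice T /\ forall h, T h -> exists! i, tips T h i.

Definition space_le (T1 T2 : pset) : Prop := subset (Ext T2) (Ext T1).

Definition causal_completion (T Th : pset) : Prop :=
  (space Th /\ space_le Th T /\ causally_complete Th) /\
  forall T1, space T1 -> space_le T1 T -> causally_complete T1 ->
    space_le Th T1 -> space_le T1 Th.

End PartialFunctions.

(* Main.v *)
Require Import Defs.
From Stdlib Require Import List Classical ClassicalEpsilon FunctionalExtensionality.
Set Implicit Arguments.

Definition PT (I V : Type) (T : pset I V) (h : pfun I V) : Prop :=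
  forall i v, h i = Some v -> Iv T i v.

Definition T1 (I V : Type) (T Th : pset I V) (h : pfun I V) : Prop :=
  Th h /\ PT T h.

Lemma Ev_Iv (I V : Type) (S : pset I V) i : Ev S i <-> exists v, Iv S i v.
Proof.
  split.
  - intros [h [Hh Hd]]. unfold in_dom in Hd. destruct (h i) as [v|] eqn:E.
    + exists v, h. auto.
    + congruence.
  - intros [v [h [Hh E]]]. exists h. split; auto. unfold in_dom. congruence.
Qed.

Lemma Ext_single (I V : Type) (S : pset I V) h : S h -> Ext S h.
Proof.
  intros Hh. exists (fun f => f = h). repeat split.
  - exists h; auto.
  - intros f ->; auto.
  - intros f g -> -> i v w E1 E2. congruence.
  - intros Hv. exists h; auto.
  - intros [f [-> E]]; auto.
Qed.

Lemma Ext_mono (I V : Type) (S S' : pset I V) k :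
  subset S S' -> Ext S k -> Ext S' k.
Proof.
  intros Hs [F [Hn [HF [Hc Hj]]]]. exists F. split; [|split; [|split]]; auto.
  intros f Hf; apply Hs, HF, Hf.
Qed.

Lemma Ext_le (I V : Type) (F : pset I V) k f :
  is_join F k -> F f -> pf_le f k.
Proof. intros Hj Hf i v E. apply Hj. exists f; auto. Qed.

Lemma Ext_PT (I V : Type) (T S : pset I V) k :
  (forall f, S f -> PT T f) -> Ext S k -> PT T k.
Proof.
  intros HS [F [Hn [HF [Hc Hj]]]] i v E.
  apply Hj in E. destruct E as [f [Hf E]]. exact (HS f (HF f Hf) i v E).
Qed.

Lemma Ext_to_T1 (I V : Type) (T Th : pset I V) k :
  Ext Th k -> PT T k -> Ext (T1 T Th) k.
Proof.
  intros [F [Hn [HF [Hc Hj]]]] Hk. exists F. split; [|split; [|split]]; auto. intros f Hf. split.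
  - apply HF; auto.
  - intros i v E. apply Hk. apply (@Ext_le I V F k f Hj Hf i v E).
Qed.

Lemma T_PT (I V : Type) (T : pset I V) h : T h -> PT T h.
Proof. intros Hh i v E. exists h; auto. Qed.

Lemma ExtT_T1 (I V : Type) (T Th : pset I V) k :
  space_le Th T -> Ext T k -> Ext (T1 T Th) k.
Proof.
  intros Hle Hk. apply Ext_to_T1. apply Hle, Hk.
  apply (Ext_PT (S:=T)); auto. apply T_PT.
Qed.

Lemma Iv_T1 (I V : Type) (T Th : pset I V) i v :
  space_le Th T -> (Iv (T1 T Th) i v <-> Iv T i v).
Proof.
  intros Hle. split.
  - intros [h [[_ Hp] E]]. exact (Hp i v E).
  - intros [h [Hh E]].
    assert (He : Ext (T1 T Th) h) by (apply ExtT_T1; auto; apply Ext_single; auto).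
    destruct He as [F [Hn [HF [Hc Hj]]]].
    apply Hj in E. destruct E as [f [Hf E]]. exists f. auto.
Qed.

Lemma Ev_T1 (I V : Type) (T Th : pset I V) i :
  space_le Th T -> (Ev (T1 T Th) i <-> Ev T i).
Proof.
  intros Hle. rewrite !Ev_Iv. split; intros [v Hv]; exists v;
  apply (Iv_T1 i v Hle); auto.
Qed.

Lemma filter_ex (A : Type) (l : list A) (Q : A -> Prop) :
  exists l', forall h, (In h l /\ Q h) <-> In h l'.
Proof.
  induction l as [|a l [l' IH]].
  - exists nil. simpl. tauto.
  - destruct (classic (Q a)) as [Ha|Ha].
    + exists (a :: l'). intros h. simpl. rewrite <- IH. split.
      * intros [[->|H] Hq]; auto.
      * intros [<-|[H1 H2]]; auto.
    + exists l'. intros h. simpl. rewrite <- IH. split.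
      * intros [[<-|H] Hq]; tauto.
      * tauto.
Qed.

Theorem proposition19 (I V : Type) (T Th : pset I V) :
  space T -> free_choice T -> causal_completion T Th ->
  (forall i, Ev Th i <-> Ev T i) /\
  (forall i, Ev T i -> forall v, Iv Th i v <-> Iv T i v).
Proof.
  intros HT Hfc [[[Hfin Hvp] [Hle Hcc]] Hmax].
  assert (Hsub : subset (T1 T Th) Th) by (intros f [Hf _]; exact Hf).
  assert (Hsp : space (T1 T Th)).
  { split.
    - destruct Hfin as [l Hl]. destruct (filter_ex l (PT T)) as [l' Hl'].
      exists l'. intros h. rewrite <- Hl', <- Hl. reflexivity.
    - intros F h HF Hc Hj [Hh Hp]. apply Hvp; auto.
      intros f Hf; apply Hsub, HF, Hf. }
  assert (Hle1 : space_le (T1 T Th) T) by (intros k Hk; apply ExtT_T1; auto).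
  assert (Htot : forall k, total_in (T1 T Th) k <-> total_in T k).
  { intros k. unfold total_in. split; intros [H1 H2]; split; intros i.
    - rewrite <- (Ev_T1 i Hle). apply H1.
    - intros v E. apply (Iv_T1 i v Hle). auto.
    - rewrite (Ev_T1 i Hle). apply H1.
    - intros v E. apply (Iv_T1 i v Hle). auto. }
  assert (Hcc1 : causally_complete (T1 T Th)).
  { split.
    - intros k. rewrite Htot. split.
      + intros [Hk Hm].
        assert (Hpk : PT T k).
        { apply (Ext_PT (S := T1 T Th)); auto. intros f [_ Hf]; auto. }
        set (t := fun i => match k i with
                  | Some v => Some v
                  | None => match excluded_middle_informative (Ev T i) with
                            | left H => Some (proj1_sig (constructive_indefinite_description _ (proj1 (Ev_Iv T i) H)))
                            | right _ => None end end).
        assert (Ht : total_in T t).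
        { split.
          - intros i. unfold in_dom, t. destruct (k i) as [v|] eqn:E.
            + split; [intros _| congruence]. apply Ev_Iv. exists v. apply Hpk; auto.
            + destruct (excluded_middle_informative (Ev T i)); split; try congruence; tauto.
          - intros i v. unfold t. destruct (k i) as [w|] eqn:E.
            + intros [= <-]. apply Hpk; auto.
            + destruct (excluded_middle_informative (Ev T i)); [|congruence].
              intros [= <-]. apply proj2_sig. }
        assert (Ht' := Ht). apply Hfc in Ht'. destruct Ht' as [HtE _].
        assert (Hkt : t = k).
        { apply Hm. apply Hle1; auto. intros i v E. unfold t. rewrite E. auto. }
        rewrite <- Hkt. exact Ht.
      + intros Hk. assert (Hm := proj2 (Hfc k) Hk). destruct Hm as [HkE _].
        split; [apply Hle1; auto|].
        intros k' Hk' Hkk'. apply functional_extensionality. intros i.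
        assert (Hp' : PT T k').
        { apply (Ext_PT (S := T1 T Th)); auto. intros f [_ Hf]; auto. }
        destruct (k' i) as [v|] eqn:E.
        * assert (Hd : in_dom k i).
          { apply (proj1 Hk). apply Ev_Iv. exists v. apply Hp'; auto. }
          unfold in_dom in Hd. destruct (k i) as [w|] eqn:E2; [|congruence].
          apply Hkk' in E2. congruence.
        * destruct (k i) as [w|] eqn:E2; auto. apply Hkk' in E2. congruence.
    - intros h [Hh Hp]. destruct (proj2 Hcc h Hh) as [i [Hi Hu]].
      assert (Heq : forall j, tips (T1 T Th) h j <-> tips Th h j).
      { intros j. unfold tips. split; intros [Hd Hn]; split; auto; intros [k [Hk [Hlt Hkd]]]; apply Hn; exists k.
        - split; auto. apply (@Ext_to_T1 I V T Th k Hk).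
          intros a v E. apply Hp. apply (proj1 Hlt); auto.
        - split; auto. apply (Ext_mono Hsub); auto. }
      exists i. split; [apply Heq; auto|]. intros j Hj. apply Hu, Heq, Hj.
  }
  assert (HE : subset (Ext Th) (Ext (T1 T Th))).
  { apply Hmax; auto. intros k Hk. apply (Ext_mono Hsub); auto. }
  assert (HIv : forall i v, Iv Th i v <-> Iv T i v).
  { intros i v. split.
    - intros [h [Hh E]]. assert (Hx := HE h (@Ext_single I V Th h Hh)).
      apply (@Ext_PT I V T (T1 T Th)) in Hx; [exact (Hx i v E)|]. intros f [_ Hf]; auto.
    - intros Hv. apply (Iv_T1 i v Hle) in Hv. destruct Hv as [h [[Hh _] E]]. exists h; auto. }
  split.
  - intros i. rewrite !Ev_Iv. split; intros [v Hv]; exists v; apply HIv; auto.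
  - intros i _ v. apply HIv.
Qed.
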